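(* Let $f:\mathbb{R}^n\to\mathbb{R}^n$ be locally Lipschitz, and let $V_1,V_2\in C^1(\mathbb{R}^n)$, continuous $N_1,N_2:\mathbb{R}^n\to[0,\infty)$, and continuous $h:[0,\infty)\to[0,\infty)$ with $h(0)=0$ and $\sup_{r>0}h(r)/r<\infty$ satisfy $\nabla V_1\cdot f\le -N_1$ and $\nabla V_2\cdot f\le -N_2+h(N_1)$ on $\mathbb{R}^n$. Assume every solution of $\dot x=f(x)$ is defined and bounded on $[0,\infty)$ and that along every solution the maps $t\mapsto N_i(x(t))$ are uniformly continuous on $[0,\infty)$. Let $E:=\{x\in\mathbb{R}^n:N_1(x)=0,\ N_2(x)=0\}$. If every point of $E$ is Lyapunov stable, then every solution converges as $t\to\infty$ to a point of $E$, and $E$ is pointwise asymptotically stable.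
   Context: A point $z$ is Lyapunov stable for $\dot x=f(x)$ if for every neighborhood $U$ of $z$ there is a neighborhood $V\subset U$ of $z$ such that every solution starting in $V$ remains in $U$ for all $t\ge0$. A set $Z$ is pointwise asymptotically stable (PAS) if (A1) every $z\in Z$ is Lyapunov stable and (A2) solutions starting sufficiently near $Z$ converge, with $\lim_{t\to\infty}x(t)\in Z$. *)

(* Defs.v *)
From HB Require Import structures.
From mathcomp Require Import all_boot all_order all_algebra.
From mathcomp Require Import all_classical all_reals all_analysis.
Set Implicit Arguments. Unset Strict Implicit. Unset Printing Implicit Defensive.
Import Order.TTheory GRing.Theory Num.Theory.
Import numFieldNormedType.Exports.
Local Open Scope classical_set_scope.
Local Open Scope ring_scope.

Section Defs.
Context {R : realType} {n : nat}.
Notation V := 'rV[R]_n.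

Definition locally_lipschitz (f : V -> V) : Prop :=
  forall x : V, exists r : R, exists L : R, 0 < r /\
    forall y z : V, ball x r y -> ball x r z -> `|f y - f z| <= L * `|y - z|.

(* V is C^1: differentiable everywhere with continuous derivative
   (continuity of every directional derivative x |-> 'd W x v) *)
Definition C1 (W : V -> R) : Prop :=
  (forall x, differentiable W x) /\
  (forall v : V, continuous (fun x => 'd W x v)).

Definition is_sol (f : V -> V) (x : R -> V) : Prop :=
  x t @[t --> (0:R)^'+] --> x 0 /\
  forall t : R, 0 < t -> is_derive t (1:R) x (f (x t)).

Definition bounded_on_pos (x : R -> V) : Prop :=
  exists M : R, forall t, 0 <= t -> `|x t| <= M.

Definition unif_cont_on_pos (g : R -> R) : Prop :=
  forall e : R, 0 < e -> exists d : R, 0 < d /\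
    forall s t, 0 <= s -> 0 <= t -> `|s - t| < d -> `|g s - g t| < e.

Definition lyapunov_stable (f : V -> V) (z : V) : Prop :=
  forall U : set V, nbhs z U -> exists W : set V, nbhs z W /\ W `<=` U /\
    forall x, is_sol f x -> W (x 0) -> forall t, 0 <= t -> U (x t).

Definition PAS (f : V -> V) (Z : set V) : Prop :=
  (forall z, Z z -> lyapunov_stable f z) /\
  (exists W : set V, (forall z, Z z -> nbhs z W) /\
     forall x, is_sol f x -> W (x 0) ->
       exists p, Z p /\ x t @[t --> +oo%R] --> p).

End Defs.

(* Main.v *)
Require Import Defs.
From HB Require Import structures.
From mathcomp Require Import all_boot all_order all_algebra.
From mathcomp Require Import all_classical all_reals all_analysis.
From mathcomp Require Import lra.
Import Order.TTheory GRing.Theory Num.Theory.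
Import numFieldNormedType.Exports.
Local Open Scope classical_set_scope.
Local Open Scope ring_scope.

Section S.
Context {R : realType} {n : nat}.
Notation V := 'rV[R]_n.
Lemma chain (f : V -> V) (W : V -> R) (x : R -> V) t :
  (forall y, differentiable W y) -> is_derive t (1:R) x (f (x t)) ->
  is_derive t (1:R) (W \o x) ('d W (x t) (f (x t))).
Proof.
move=> dW dx.
have dxt : differentiable x t by apply/derivable1_diffP; exact: ex_derive.
apply: DeriveDef.
  by apply/derivable1_diffP; apply: differentiable_comp.
rewrite deriveE; last by apply: differentiable_comp.
rewrite diff_comp //= -(@deriveE _ _ _ x t 1 dxt).
by case: dx => _ ->.
Qed.

Lemma shift_sol (f : V -> V) (x : R -> V) s : 0 < s -> is_sol f x ->
  is_sol f (fun t => x (t + s)).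
Proof.
move=> s0 [_ dx]; split.
  have cx : {for s, continuous x}.
    apply: differentiable_continuous; apply/derivable1_diffP.
    by case: (dx s s0).
  rewrite add0r; apply: cvg_at_right_filter.
  apply: (@cvg_comp _ _ _ (fun t => t + s) x (nbhs 0) (nbhs s)); last exact: cx.
  have H : (fun t : R => t + s) @ (nbhs (0:R)) --> (0 + s).
    by apply: cvgD; [exact: cvg_id | exact: cvg_cst].
  by rewrite add0r in H.
move=> t t0.
have [dd de] := dx (t + s) (addr_gt0 t0 s0).
have E : (fun h : R => h^-1 *: (((fun u => x (u + s)) \o shift t) (h *: 1) - x (t + s)))
  = (fun h : R => h^-1 *: ((x \o shift (t + s)) (h *: 1) - x (t + s))).
  by apply: funext => h /=; rewrite addrA.
apply: DeriveDef.
  by move: dd; rewrite /derivable E.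
by rewrite -de /derive E.
Qed.
Lemma barbalat (g dg N : R -> R) :
  (forall t : R, 0 < t -> is_derive t (1:R) g (dg t)) ->
  (forall t, 0 < t -> dg t <= - N t) ->
  (forall t, 0 <= t -> 0 <= N t) ->
  unif_cont_on_pos N ->
  (exists B, forall t, 0 < t -> B <= g t) ->
  forall e, 0 < e -> exists T, 0 < T /\ forall t, T <= t -> N t < e.
Proof.
move=> dgP dgle N0 uc [B gB] e e0.
have mvt : forall a b, 0 < a -> a < b ->
    exists2 c, c \in `]a, b[ & g b - g a = dg c * (b - a).
  move=> a b a0 ab; apply: MVT => //.
    by move=> y; rewrite in_itv /= => /andP[ay _]; apply: dgP; lra.
  apply: derivable_within_continuous => y; rewrite in_itv /= => /andP[ay _].
  by case: (dgP y ltac:(lra)).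
have mono : forall a b, 0 < a -> a <= b -> g b <= g a.
  move=> a b a0; rewrite le_eqVlt => /orP[/eqP -> //|ab].
  have [c] := mvt a b a0 ab; rewrite in_itv /= => /andP[ac cb] E.
  have := dgle c ltac:(lra); have := N0 c ltac:(lra) => Nc dc.
  have : dg c * (b - a) <= 0 by nra.
  lra.
have [d [d0 Hd]] := uc (e / 2) ltac:(lra).
pose c := e / 2 * d.
have c0 : 0 < c by rewrite /c; nra.
have drop : forall t, 0 < t -> e <= N t -> g (t + d) <= g t - c.
  move=> t t0 et.
  have [c1] := mvt t (t + d) t0 ltac:(lra); rewrite in_itv /= => /andP[tc cb] E.
  have cd : `|c1 - t| < d by rewrite ger0_norm; lra.
  have := Hd c1 t ltac:(lra) ltac:(lra) cd.
  rewrite ltr_norml => /andP[H1 H2].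
  have := dgle c1 ltac:(lra) => dc.
  have : dg c1 * d <= - (e / 2) * d by nra.
  rewrite /c; move: E; rewrite addrAC subrr add0r; lra.
apply: contrapT => Hno.
have Hk : forall T, 0 < T -> exists t, T <= t /\ e <= N t.
  move=> T T0; apply: contrapT => H; apply: Hno; exists T; split=> // t Tt.
  rewrite ltNge; apply/negP => et; apply: H; exists t; split=> //.
have ind : forall k : nat, exists t, 1 <= t /\ g t <= g 1 - k%:R * c.
  elim=> [|k [t [t1 gt]]].
    by exists 1; split=> //; rewrite mul0r subr0.
  have [t' [tt' et']] := Hk t ltac:(lra).
  exists (t' + d); split; first lra.
  have := drop t' ltac:(lra) et'.
  have := mono t t' ltac:(lra) tt'.
  rewrite -natr1 mulrDl mul1r; lra.
pose k := (Num.truncn ((g 1 - B) / c)).+1.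
have [t [t1 gt]] := ind k.
have : (g 1 - B) / c < k%:R by apply: truncnS_gt.
rewrite ltr_pdivrMr // => H.
have := gB t ltac:(lra); lra.
Qed.

Lemma compact_K (M : R) : compact [set v : V | `|v| <= M].
Proof.
apply: bounded_closed_compact.
  rewrite /bounded_near; apply: filterS (nbhs_pinfty_ge (num_real M)).
  by move=> M' MM' v /= vM; apply: le_trans MM'.
have -> : [set v : V | `|v| <= M] = (fun v : V => `|v|) @^-1` [set r | r <= M] by [].
by apply: (proj1 (continuous_closedP _)) (@closed_le _ M); exact: norm_continuous.
Qed.

Lemma lower_bound (W : V -> R) (x : R -> V) : continuous W ->
  bounded_on_pos x -> exists B, forall t, 0 < t -> B <= W (x t).
Proof.
move=> cW [M xM].
have cK := compact_K M.
have /compact_bounded bnd : compact (W @` [set v : V | `|v| <= M]).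
  by apply: continuous_compact => //; exact: continuous_subspaceT.
have [B' [_ HB]] := bnd.
exists (- (B' + 1)) => t t0.
have := HB (B' + 1) ltac:(by rewrite ltrDl) (W (x t)) ltac:(by exists (x t) => //=; apply: xM; exact: ltW).
by rewrite /= ler_norml => /andP[].
Qed.
End S.
Arguments chain {R n f W x t}.
Arguments shift_sol {R n f x s}.
Arguments lower_bound {R n W x}.

Theorem corollary2p6 (R : realType) (n : nat) (f : 'rV[R]_n -> 'rV[R]_n)
  (V1 V2 N1 N2 : 'rV[R]_n -> R) (h : R -> R) :
  locally_lipschitz f ->
  C1 V1 -> C1 V2 ->
  continuous N1 -> continuous N2 ->
  (forall x, 0 <= N1 x) -> (forall x, 0 <= N2 x) ->
  {within `[0, +oo[, continuous h} ->
  (forall r, 0 <= r -> 0 <= h r) -> h 0 = 0 ->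
  (exists M : R, forall r, 0 < r -> h r / r <= M) ->
  (forall x, 'd V1 x (f x) <= - N1 x) ->
  (forall x, 'd V2 x (f x) <= - N2 x + h (N1 x)) ->
  (forall x0, exists x, is_sol f x /\ x 0 = x0) ->
  (forall x, is_sol f x -> bounded_on_pos x) ->
  (forall x, is_sol f x ->
     unif_cont_on_pos (fun t => N1 (x t)) /\ unif_cont_on_pos (fun t => N2 (x t))) ->
  let E := [set x | N1 x = 0 /\ N2 x = 0] in
  (forall z, E z -> lyapunov_stable f z) ->
  (forall x, is_sol f x -> exists p, E p /\ x t @[t --> +oo%R] --> p) /\ PAS f E.
Proof.
Proof.
move=> _ [dV1 _] [dV2 _] cN1 cN2 N1ge N2ge _ h0 h00 [M hM] HV1 HV2 _ bnd uc E stab.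
suff conv : forall x, is_sol f x -> exists p, E p /\ x t @[t --> +oo%R] --> p.
  split=> //; split=> //; exists setT; split; first by move=> z _; exact: filterT.
  by move=> x xs _; exact: conv x xs.
move=> x xs.
have [Mx xM] := bnd x xs.
have [uc1 uc2] := uc x xs.
have [_ dx] := xs.
pose M' := Num.max M 0.
have M'0 : 0 <= M' by rewrite /M' le_max lexx orbT.
have hle : forall r, 0 <= r -> h r <= M' * r.
  move=> r; rewrite le_eqVlt => /orP[/eqP <-|r0]; first by rewrite h00 mulr0.
  have := hM r r0; rewrite ler_pdivrMr // => H; apply: le_trans H _.
  by rewrite ler_pM2r // le_max lexx.
have cV1 : continuous V1 by move=> y; exact: differentiable_continuous.
have cV2 : continuous V2 by move=> y; exact: differentiable_continuous.
have [B1 hB1] := lower_bound cV1 (bnd x xs).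
have [B2 hB2] := lower_bound cV2 (bnd x xs).
have conv1 := @barbalat R (V1 \o x) (fun t => 'd V1 (x t) (f (x t))) (fun t => N1 (x t))
  (fun t t0 => chain dV1 (dx t t0)) (fun t _ => HV1 (x t)) (fun t _ => N1ge (x t)) uc1
  (ex_intro _ B1 hB1).
have conv2 := @barbalat R ((V2 \o x) + M' \*: (V1 \o x))
  (fun t => 'd V2 (x t) (f (x t)) + M' *: 'd V1 (x t) (f (x t))) (fun t => N2 (x t))
  (fun t t0 => is_deriveD (chain dV2 (dx t t0)) (is_deriveZ M' (chain dV1 (dx t t0))))
  _ (fun t _ => N2ge (x t)) uc2 _.
have {conv2}conv2 : forall e, 0 < e -> exists T, 0 < T /\ forall t, T <= t -> N2 (x t) < e.
  apply: conv2.
    move=> t _ /=.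
    have := HV1 (x t); have := HV2 (x t); have := hle (N1 (x t)) (N1ge _).
    have -> : forall a : R, M' *: a = M' * a by [].
    nra.
  exists (B2 + M' * B1) => t t0 /=.
  have := hB1 t t0; have := hB2 t t0.
  have -> : (V2 \o x + M' \*: (V1 \o x)) t = V2 (x t) + M' * V1 (x t) by [].
  nra.
have [p [Kp clp]] := compact_K Mx (x @ +oo%R) _ (ex_intro _ 0 (conj (num_real 0)
   (fun t t0 => xM t (ltW t0)))).
have hit : forall T B, nbhs p B -> exists t, T < t /\ B (x t).
  move=> T B pB.
  have [y [[t Tt <-] By]] := clp (x @` [set t | T < t]) B
    (ex_intro _ T (conj (num_real T) (fun t Tt => ex_intro2 _ _ t Tt erefl))) pB.
  by exists t.
have zero : forall N : 'rV[R]_n -> R, continuous N -> (forall y, 0 <= N y) ->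
    (forall e, 0 < e -> exists T, 0 < T /\ forall t, T <= t -> N (x t) < e) -> N p = 0.
  move=> N cN Nge cv.
  apply/eqP; rewrite eq_le Nge andbT leNgt; apply/negP => Np.
  have [T [T0 HT]] := cv (N p / 2) ltac:(lra).
  have := cN p; move/cvgrPdist_lt => /(_ (N p / 2) ltac:(lra)) nb.
  have [t [Tt Ht]] := hit T _ nb.
  have := HT t (ltW Tt); have := ler_norm (N p - N (x t)) => /=.
  move: Ht => /= Ht; lra.
exists p; split; first by split; [apply: zero| apply: zero].
apply/cvgrPdist_lt => eps eps0.
have [W [nW [WU Wsol]]] := stab p (conj (zero _ cN1 N1ge conv1) (zero _ cN2 N2ge conv2))
   (ball p eps) (nbhsx_ballx p eps eps0).
have [t0 [t01 Wt0]] := hit 1 W nW.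
have t00 : 0 < t0 by lra.
have ys := shift_sol t00 xs.
have := Wsol _ ys; rewrite /= add0r => /(_ Wt0) Hs.
exists t0; split; first exact: num_real.
move=> t tt0.
have := Hs (t - t0) ltac:(lra); rewrite subrK -ball_normE /=.
by [].
Qed.
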